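(* Let $(\mathsf P,\mathcal O)$ be a semitopology, let $\mathsf{Val}$ be a set with at least two elements equipped with the discrete semitopology, and let $T\subseteq\mathsf P$ be any set. Suppose that for every $p,p'\in T$ and every function $f:\mathsf P\to\mathsf{Val}$, if $f$ is continuous at $p$ and at $p'$ then $f(p)=f(p')$. Then $T$ is transitive.
   Context: A semitopology is a pair $(\mathsf P,\mathcal O)$ where $\mathsf P$ is a set and $\mathcal O\subseteq\mathcal P(\mathsf P)$ contains $\varnothing$ and $\mathsf P$ and is closed under arbitrary unions; elements of $\mathcal O$ are open sets. Write $X\between Y$ when $X\cap Y\neq\varnothing$. A set $T\subseteq\mathsf P$ is transitive when for all $O,O'\in\mathcal O$, $O\between T$ and $T\between O'$ imply $O\between O'$. A function $f:\mathsf P\to\mathsf{Val}$ is continuous at $p$ when for every open $V\ni f(p)$ there is an open $O$ with $p\in O\subseteq f^{-1}(V)$. *)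

(* Defs.v *)
Set Implicit Arguments.

Record semitopology (P : Type) := {
  is_open : (P -> Prop) -> Prop;
  open_empty : is_open (fun _ => False);
  open_full : is_open (fun _ => True);
  open_union : forall (I : Type) (F : I -> P -> Prop),
      (forall i, is_open (F i)) -> is_open (fun x => exists i, F i x)
}.

Definition meets {P : Type} (X Y : P -> Prop) : Prop := exists x, X x /\ Y x.

Definition transitive_set {P : Type} (S : semitopology P) (T : P -> Prop) : Prop :=
  forall O O' : P -> Prop, is_open S O -> is_open S O' ->
    meets O T -> meets T O' -> meets O O'.

Definition discrete_semitopology (V : Type) : semitopology V.
Proof.
  refine {| is_open := fun _ => True |}; auto.
Defined.

Definition continuous_at {P V : Type} (SP : semitopology P) (SV : semitopology V)
  (f : P -> V) (p : P) : Prop :=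
  forall W : V -> Prop, is_open SV W -> W (f p) ->
    exists O : P -> Prop, is_open SP O /\ O p /\ (forall x, O x -> W (f x)).

(* Main.v *)
Require Import Defs.
From Stdlib Require Import Classical ClassicalEpsilon.

Theorem proposition3p7 (P : Type) (S : semitopology P) (Val : Type)
  (v1 v2 : Val) (hv : v1 <> v2) (T : P -> Prop) :
  (forall (p p' : P) (f : P -> Val), T p -> T p' ->
     continuous_at S (discrete_semitopology Val) f p ->
     continuous_at S (discrete_semitopology Val) f p' ->
     f p = f p') ->
  transitive_set S T.
Proof.
  intros H O O' HO HO' [p [Op Tp]] [p' [Tp' O'p']].
  apply NNPP; intro Hn.
  assert (Hd : forall x, O x -> O' x -> False)
    by (intros x a b; apply Hn; exists x; auto).
  set (f := fun x => if excluded_middle_informative (O x) then v1 else v2).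
  assert (E := H p p' f Tp Tp').
  assert (Fin : forall x, O x -> f x = v1)
    by (intros x Ox; unfold f; destruct (excluded_middle_informative (O x)); tauto).
  assert (Fout : forall x, O' x -> f x = v2)
    by (intros x Ox; unfold f; destruct (excluded_middle_informative (O x)) as [a|a];
        [exfalso; eapply Hd; eauto | reflexivity]).
  apply hv. rewrite <- (Fin p Op), <- (Fout p' O'p'). apply E.
  - intros W _ HW. exists O. split; [exact HO|]. split; [exact Op|].
    intros x Ox. rewrite (Fin x Ox). rewrite (Fin p Op) in HW. exact HW.
  - intros W _ HW. exists O'. split; [exact HO'|]. split; [exact O'p'|].
    intros x Ox. rewrite (Fout x Ox). rewrite (Fout p' O'p') in HW. exact HW.
Qed.
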